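(* For the model $\dot S=\Lambda-F_1(S,I_1)-F_2(S,I_2)-\lambda S$, $\dot V_1=rS-(\mu+kI_2)V_1$, $\dot I_1=F_1(S,I_1)-\alpha_1I_1$, $\dot I_2=F_2(S,I_2)+kI_2V_1-\alpha_2I_2$, the closed set $\Omega_1=\{(S,V_1,I_1,I_2)\in\Omega : S\le S^0,\ V_1\le V_1^0\}$ is positively invariant.
   Context: The state is $(S,V_1,I_1,I_2)\in\mathbb{R}^4_+$. The constants $\Lambda,\mu,r,k,\gamma_1,\gamma_2>0$ and $v_1,v_2\ge0$; $\lambda=r+\mu$ and $\alpha_i=\gamma_i+v_i+\mu$. For $i=1,2$ the incidence functions satisfy: (H1) $F_i(S,I_i)=I_if_i(S,I_i)$ with $F_i,f_i\in C^2(\mathbb{R}^2_+,\mathbb{R}_+)$ and $F_i(0,I_i)=F_i(S,0)=0$; (H2) $\partial f_i/\partial S>0$ and $\partial f_i/\partial I_i\le0$ on $\mathbb{R}^2_+$; (H3) $\lim_{I_i\to0^+}F_i(S,I_i)/I_i$ exists and is positive for $S>0$. Here $\Omega=\{(S,V_1,I_1,I_2)\in\mathbb{R}^4_+: S+V_1+I_1+I_2\le\Lambda/\mu\}$, $S^0=\Lambda/\lambda$ and $V_1^0=r\Lambda/(\mu\lambda)$. *)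

(* Defs.v *)
From Stdlib Require Import Reals.
From Coquelicot Require Import Coquelicot.
Open Scope R_scope.

Definition quad (s i : R) : Prop := 0 <= s /\ 0 <= i.

(* Hypotheses on one incidence function F_i = I_i f_i (paper: (H1)-(H3)).
   "F, f in C^2(R^2_+, R_+)" is rendered as: F, f are nonnegative on R^2_+
   and are restrictions to R^2_+ of functions GF, Gf that are C^2
   (Coquelicot's ex_diff_n _ 2) at every point of R^2_+.  The partial
   derivatives in (H2) are those of this C^2 extension (which on the
   boundary coincide with the one-sided derivatives of f). *)
Definition incidence_hyp (F f : R -> R -> R) : Prop :=
  (forall s i, quad s i -> 0 <= F s i /\ 0 <= f s i) /\
  (forall s i, quad s i -> F s i = i * f s i) /\
  (exists GF Gf : R -> R -> R,
      (forall s i, quad s i -> GF s i = F s i /\ Gf s i = f s i) /\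
      (forall s i, quad s i -> ex_diff_n GF 2 s i /\ ex_diff_n Gf 2 s i) /\
      (forall s i, quad s i ->
         Derive (fun z => Gf z i) s > 0 /\ Derive (fun z => Gf s z) i <= 0)) /\
  (forall i, 0 <= i -> F 0 i = 0) /\
  (forall s, 0 <= s -> F s 0 = 0) /\
  (forall s, 0 < s -> exists L, 0 < L /\
      filterlim (fun i => F s i / i) (at_right 0) (locally L)).

Definition is_solution (Lam mu r k g1 g2 v1 v2 : R) (F1 F2 : R -> R -> R)
  (T : R) (S V1 I1 I2 : R -> R) : Prop :=
  let lam := r + mu in
  let a1 := g1 + v1 + mu in
  let a2 := g2 + v2 + mu in
  (forall t, 0 <= t < T -> 0 <= S t /\ 0 <= V1 t /\ 0 <= I1 t /\ 0 <= I2 t) /\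
  filterlim S (at_right 0) (locally (S 0)) /\
  filterlim V1 (at_right 0) (locally (V1 0)) /\
  filterlim I1 (at_right 0) (locally (I1 0)) /\
  filterlim I2 (at_right 0) (locally (I2 0)) /\
  (forall t, 0 < t < T ->
     is_derive S t (Lam - F1 (S t) (I1 t) - F2 (S t) (I2 t) - lam * S t) /\
     is_derive V1 t (r * S t - (mu + k * I2 t) * V1 t) /\
     is_derive I1 t (F1 (S t) (I1 t) - a1 * I1 t) /\
     is_derive I2 t (F2 (S t) (I2 t) + k * I2 t * V1 t - a2 * I2 t)).

Definition Omega (Lam mu : R) (S V1 I1 I2 : R) : Prop :=
  0 <= S /\ 0 <= V1 /\ 0 <= I1 /\ 0 <= I2 /\ S + V1 + I1 + I2 <= Lam / mu.

Definition Omega1 (Lam mu r : R) (S V1 I1 I2 : R) : Prop :=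
  Omega Lam mu S V1 I1 I2 /\ S <= Lam / (r + mu) /\
  V1 <= r * Lam / (mu * (r + mu)).

(* Main.v *)
Require Import Defs.
From Stdlib Require Import Reals Lra Psatz.
From Coquelicot Require Import Coquelicot.
Open Scope R_scope.

Lemma lim_ge (u : R -> R) (t m : R) : 0 < t ->
  filterlim u (at_right 0) (locally (u 0)) ->
  (forall s, 0 < s < t -> m <= u s) -> m <= u 0.
Proof.
  intros Ht Hl Hm.
  destruct (Rle_lt_dec m (u 0)) as [H|H]; [exact H|exfalso].
  assert (He : 0 < m - u 0) by lra.
  destruct (proj1 (filterlim_locally u (u 0)) Hl (mkposreal _ He)) as [d Hd].
  set (s := Rmin (d/2) (t/2)).
  assert (Hs0 : 0 < s) by (unfold s; destruct d; simpl; apply Rmin_pos; lra).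
  assert (Hs1 : s < t) by (unfold s; pose proof (Rmin_r (d/2) (t/2)); lra).
  assert (Hs2 : s < d) by (unfold s; pose proof (Rmin_l (d/2) (t/2)); destruct d; simpl in *; lra).
  assert (B : ball (u 0) (m - u 0) (u s)).
  { apply Hd; [|lra]. unfold ball; simpl; unfold AbsRing_ball, abs, minus, plus, opp; simpl.
    replace (s + - 0) with s by ring. rewrite Rabs_right; lra. }
  unfold ball in B; simpl in B; unfold AbsRing_ball, abs, minus, plus, opp in B; simpl in B.
  pose proof (Hm s (conj Hs0 Hs1)).
  apply Rabs_def2 in B. lra.
Qed.

Lemma key (u du : R -> R) (a c T : R) : 0 < a ->
  filterlim u (at_right 0) (locally (u 0)) -> u 0 <= c ->
  (forall t, 0 < t < T -> is_derive u t (du t) /\ du t <= a * (c - u t)) ->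
  forall t, 0 <= t < T -> u t <= c.
Proof.
  intros Ha Hl H0 Hd t Ht.
  destruct (Req_dec t 0) as [->|Htn]; [exact H0|].
  destruct (Rle_lt_dec (u t) c) as [H|H]; [exact H|exfalso].
  set (g := fun x => (u x - c) * exp (a * x)).
  set (dg := fun x => exp (a * x) * (du x + a * (u x - c))).
  assert (Dg : forall x, 0 < x < T -> is_derive g x (dg x)).
  { intros x Hx. destruct (Hd x Hx) as [D _].
    assert (E : is_derive (fun y => exp (a * y)) x (a * exp (a * x))).
    { auto_derive; auto; ring. }
    assert (M := is_derive_mult (fun y => u y - c) (fun y => exp (a * y)) x (du x) (a * exp (a*x))).
    unfold g, dg.
    eapply is_derive_ext. { intro y. reflexivity. }
    replace (exp (a * x) * (du x + a * (u x - c))) with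
      (plus (mult (du x) (exp (a*x))) (mult (u x - c) (a * exp (a*x)))).
    2:{ unfold plus, mult; simpl; ring. }
    apply M.
    - assert (P := is_derive_minus u (fun _ => c) x (du x) 0 D (is_derive_const c x)).
      replace (du x) with (minus (du x) 0) by (unfold minus, plus, opp; simpl; ring).
      eapply is_derive_ext; [|exact P]. intro y; reflexivity.
    - exact E.
    - intros; unfold mult; simpl; ring. }
  assert (Mono : forall s, 0 < s < t -> g t <= g s).
  { intros s Hs.
    destruct (MVT_gen g s t dg) as [x [Hx Heq]].
    - intros x Hx. rewrite Rmin_left in Hx by lra. rewrite Rmax_right in Hx by lra.
      apply Dg; lra.
    - intros x Hx. rewrite Rmin_left in Hx by lra. rewrite Rmax_right in Hx by lra.
      apply continuity_pt_filterlim. apply (ex_derive_continuous g).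
      eexists. apply Dg; lra.
    - rewrite Rmin_left in Hx by lra. rewrite Rmax_right in Hx by lra.
      assert (dg x <= 0).
      { unfold dg. destruct (Hd x ltac:(lra)) as [_ Hle].
        pose proof (exp_pos (a*x)). nra. }
      nra. }
  assert (Ge : forall s, 0 < s < t -> u t <= u s).
  { intros s Hs. pose proof (Mono s Hs) as M. unfold g in M.
    assert (E1 : exp (a * s) <= exp (a * t)).
    { apply Rlt_le, exp_increasing. nra. }
    pose proof (exp_pos (a*s)).
    destruct (Rle_lt_dec (u t) (u s)) as [h|h]; [exact h|]. nra. }
  pose proof (lim_ge u t (u t) ltac:(lra) Hl Ge). lra.
Qed.

Theorem mainTheorem3 (Lam mu r k g1 g2 v1 v2 : R) (F1 f1 F2 f2 : R -> R -> R) :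
  0 < Lam -> 0 < mu -> 0 < r -> 0 < k -> 0 < g1 -> 0 < g2 ->
  0 <= v1 -> 0 <= v2 ->
  incidence_hyp F1 f1 -> incidence_hyp F2 f2 ->
  forall (T : R) (S V1 I1 I2 : R -> R),
    0 < T ->
    is_solution Lam mu r k g1 g2 v1 v2 F1 F2 T S V1 I1 I2 ->
    Omega1 Lam mu r (S 0) (V1 0) (I1 0) (I2 0) ->
    forall t, 0 <= t < T -> Omega1 Lam mu r (S t) (V1 t) (I1 t) (I2 t).
Proof.
  intros HL Hmu Hr Hk Hg1 Hg2 Hv1 Hv2 [HF1 _] [HF2 _] T S V1 I1 I2 HT
    [Hpos [LS [LV [LI1 [LI2 HD]]]]] [[_ [_ [_ [_ HN0]]]] [HS0 HV0]].
  assert (Fnn : forall t, 0 < t < T -> 0 <= F1 (S t) (I1 t) /\ 0 <= F2 (S t) (I2 t)).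
  { intros t Ht. destruct (Hpos t ltac:(lra)) as [a [b [c d]]].
    split; [apply (HF1 (S t) (I1 t)) | apply (HF2 (S t) (I2 t))]; split; lra. }
  assert (BS : forall t, 0 <= t < T -> S t <= Lam / (r + mu)).
  { apply (key S (fun t => Lam - F1 (S t) (I1 t) - F2 (S t) (I2 t) - (r + mu) * S t)
      (r + mu) (Lam / (r + mu)) T); try lra; auto.
    intros t Ht. split; [apply (HD t Ht)|].
    destruct (Fnn t Ht).
    assert (E : (r + mu) * (Lam / (r + mu) - S t) = Lam - (r + mu) * S t) by (field; lra).
    rewrite E. lra. }
  assert (BV : forall t, 0 <= t < T -> V1 t <= r * Lam / (mu * (r + mu))).
  { apply (key V1 (fun t => r * S t - (mu + k * I2 t) * V1 t)
      mu (r * Lam / (mu * (r + mu))) T); try lra; auto.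
    intros t Ht. split; [apply (HD t Ht)|].
    destruct (Hpos t ltac:(lra)) as [a [b [c d]]].
    pose proof (BS t ltac:(lra)).
    assert (E : mu * (r * Lam / (mu * (r + mu)) - V1 t) = r * (Lam / (r + mu)) - mu * V1 t)
      by (field; lra).
    assert (0 <= k * I2 t * V1 t) by (apply Rmult_le_pos; [apply Rmult_le_pos|]; lra).
    rewrite E. nra. }
  assert (BN : forall t, 0 <= t < T -> S t + V1 t + I1 t + I2 t <= Lam / mu).
  { apply (key (fun t => S t + V1 t + I1 t + I2 t)
      (fun t => (Lam - F1 (S t) (I1 t) - F2 (S t) (I2 t) - (r + mu) * S t)
        + (r * S t - (mu + k * I2 t) * V1 t)
        + (F1 (S t) (I1 t) - (g1 + v1 + mu) * I1 t)
        + (F2 (S t) (I2 t) + k * I2 t * V1 t - (g2 + v2 + mu) * I2 t))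
      mu (Lam / mu) T); try lra; auto.
    - assert (P : forall x y : R, filterlim (fun z : R * R => Rplus (fst z) (snd z))
          (filter_prod (locally x) (locally y)) (locally (x + y)))
        by (intros x y; exact (filterlim_plus (K:=R_AbsRing) (V:=R_NormedModule) x y)).
      eapply (filterlim_comp_2 (fun t => S t + V1 t + I1 t) I2 Rplus); [|exact LI2|apply P].
      eapply (filterlim_comp_2 (fun t => S t + V1 t) I1 Rplus); [|exact LI1|apply P].
      eapply (filterlim_comp_2 S V1 Rplus); [exact LS|exact LV|apply P].
    - intros t Ht. destruct (HD t Ht) as [D1 [D2 [D3 D4]]]. split.
      + apply (is_derive_plus (fun t => S t + V1 t + I1 t)); [|exact D4].
        apply (is_derive_plus (fun t => S t + V1 t)); [|exact D3].
        apply (is_derive_plus S V1); [exact D1|exact D2].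
      + destruct (Hpos t ltac:(lra)) as [a [b [c d]]].
        assert (E : mu * (Lam / mu - (S t + V1 t + I1 t + I2 t)) = Lam - mu * (S t + V1 t + I1 t + I2 t))
          by (field; lra).
        rewrite E. nra. }
  intros t Ht. destruct (Hpos t Ht) as [a [b [c d]]].
  split; [|split; auto]. repeat split; auto.
Qed.
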